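(* Let $\psi(x)=(1-|x|^2)_+^2$ on $\mathbb{R}^2$. Suppose that $w:\mathbb{R}^2\to[0,\infty)$ is locally in $L^1\cap L^\infty$, that $\int_{B(1)}w(x)\,dx\le m$ for some $m>0$, and let $\varrho,\delta\in(0,1)$. (i) There exists $H_0\in(0,1)$ such that $\int_{B(\varrho)}w(x)\,dx\le(1-\delta)m$ implies $\int_{\mathbb{R}^2}\psi(x)w(x)\,dx\le(1-H_0)m$. (ii) There exists $H_1\in(0,1)$ such that if $\int_{B(1)}w(x)\,dx\le m$ and $\int_{\mathbb{R}^2}\psi(x)w(x)\,dx\ge(1-H_1)m$, then $\int_{B(\varrho)}w(x)\,dx\ge\left(1-\frac{\delta}{2}\right)m$. (iii) If $\int_{\mathbb{R}^2}\psi(x)w(x)\,dx\le(1-H)m$ for some $H\in(0,1)$, then $\int_{B(\beta)}w(x)\,dx\le\left(1-\frac{H}{2}\right)m$ for every $\beta>0$ with $\beta^2\le\frac{H}{4}$.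
   Context: $B(r)$ denotes the open ball of radius $r$ centered at the origin of $\mathbb{R}^2$; $(s)_+=\max\{s,0\}$. *)

(* Defs.v *)
(* R^2 is modelled as R * R with the product
   Lebesgue measure. *)
From HB Require Import structures.
From mathcomp Require Import all_boot all_order all_algebra.
From mathcomp Require Import all_classical all_reals all_analysis.
Set Implicit Arguments. Unset Strict Implicit. Unset Printing Implicit Defensive.
Import Order.TTheory GRing.Theory Num.Theory.
Local Open Scope classical_set_scope.
Local Open Scope ring_scope.

Definition leb2 (R : realType) :=
  ((@lebesgue_measure R) \x (@lebesgue_measure R))%E.

Arguments leb2 R : clear implicits.

Definition sqnorm2 (R : realType) (x : R * R) : R := x.1 ^+ 2 + x.2 ^+ 2.

Definition Bo (R : realType) (r : R) : set (R * R) :=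
  [set x | sqnorm2 x < r ^+ 2].

Definition psi (R : realType) (x : R * R) : R := (Num.max (1 - sqnorm2 x) 0) ^+ 2.

Definition loc_L1_Linf (R : realType) (w : R * R -> R) : Prop :=
  measurable_fun [set: R * R] w /\
  forall r : R, 0 < r ->
    (leb2 R).-integrable (Bo r) (EFin \o w) /\
    exists M : R, {ae leb2 R, forall x, Bo r x -> `|w x| <= M}.

(* Main.v *)
Require Import Defs.
From HB Require Import structures.
From mathcomp Require Import all_boot all_order all_algebra.
From mathcomp Require Import all_classical all_reals all_analysis.
From mathcomp Require Import lra measurable_realfun.
Import Order.TTheory GRing.Theory Num.Theory.
Local Open Scope classical_set_scope.
Local Open Scope ring_scope.

Section H.
Variable R : realType.

Lemma msq : measurable_fun [set: R * R] (@sqnorm2 R).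
Proof.
apply: measurable_funD; apply: measurable_funX; [exact: measurable_fst | exact: measurable_snd].
Qed.

Lemma mBo (r : R) : measurable (Bo r).
Proof.
have := msq measurableT _ (measurable_itv `]-oo, r^+2[); rewrite setTI.
congr measurable; apply/seteqP; split => x /=; rewrite in_itv /=; by [].
Qed.

Lemma mpsi : measurable_fun [set: R * R] (@psi R).
Proof.
apply: measurable_funX; apply: measurable_maxr => //.
apply: measurable_funB => //; exact: msq.
Qed.

Lemma psi_ge0 x : 0 <= @psi R x.
Proof. by rewrite /psi sqr_ge0. Qed.

Lemma sq_ge0' x : 0 <= @sqnorm2 R x.
Proof. by rewrite /sqnorm2 addr_ge0 // sqr_ge0. Qed.


Lemma psi_le1 x : @psi R x <= 1.
Proof.
have s0 := sq_ge0' x; rewrite /psi.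
case: (leP (1 - sqnorm2 x) 0) => h.
  by rewrite expr0n.
nra.
Qed.

Lemma psi_out x : ~ Bo 1 x -> @psi R x = 0.
Proof.
rewrite /Bo /= expr1n => /negP; rewrite -leNgt => h.
by rewrite /psi max_r ?expr0n // subr_le0.
Qed.

Lemma psi_ann (r : R) x : 0 <= r -> r < 1 -> Bo 1 x -> ~ Bo r x ->
  @psi R x <= (1 - r ^+ 2) ^+ 2.
Proof.
rewrite /Bo /= expr1n => r0 r1 h /negP; rewrite -leNgt => h2.
rewrite /psi max_l; last by rewrite subr_ge0 ltW.
nra.
Qed.

Lemma psi_in (b : R) x : 0 <= b -> b ^+ 2 <= 1 -> Bo b x ->
  (1 - b ^+ 2) ^+ 2 <= @psi R x.
Proof.
rewrite /Bo /= => b0 b1 h; have s0 := sq_ge0' x.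
rewrite /psi max_l; last by rewrite subr_ge0 ltW // (lt_le_trans h).
nra.
Qed.

Lemma BoS (r s : R) : 0 <= r -> r <= s -> Bo r `<=` Bo s.
Proof.
move=> r0 rs x; rewrite /Bo /= => h; apply: (lt_le_trans h).
by rewrite ler_pXn2r // ?nnegrE // (le_trans r0).
Qed.

Lemma efin_bound (x : \bar R) (y : R) : (0 <= x)%E -> (x <= y%:E)%E -> x = (fine x)%:E.
Proof. by case: x. Qed.

Variables (w : R * R -> R) (w0 : forall x, 0 <= w x)
  (mw : measurable_fun [set: R * R] w).

Lemma mW (D : set (R * R)) : measurable_fun D (fun x => (w x)%:E).
Proof. apply: (measurable_funS measurableT) => //; apply/measurable_EFinP; exact: mw. Qed.

Lemma mPW (D : set (R * R)) : measurable_fun D (fun x => (psi x * w x)%:E).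
Proof.
apply: (measurable_funS measurableT) => //; apply/measurable_EFinP.
apply: measurable_funM => //; exact: mpsi.
Qed.

Lemma P_restrict : (\int[leb2 R]_(x in [set: R * R]) (psi x * w x)%:E =
  \int[leb2 R]_(x in Bo 1) (psi x * w x)%:E)%E.
Proof.
rewrite [RHS]integral_mkcond; apply: eq_integral => x _; rewrite /patch.
case: ifPn => // /negP; rewrite inE => h.
by rewrite psi_out // mul0r.
Qed.

Lemma split_ann (r : R) : 0 < r < 1 ->
  (\int[leb2 R]_(x in Bo 1) (w x)%:E =
     \int[leb2 R]_(x in Bo r) (w x)%:E + \int[leb2 R]_(x in Bo 1 `\` Bo r) (w x)%:E)%E /\
  (\int[leb2 R]_(x in Bo 1) (psi x * w x)%:E <=
     \int[leb2 R]_(x in Bo r) (w x)%:E +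
     ((1 - r ^+ 2) ^+ 2)%:E * \int[leb2 R]_(x in Bo 1 `\` Bo r) (w x)%:E)%E.
Proof.
move=> /andP[r0 r1].
have sub : Bo r `<=` Bo 1 by apply: BoS; [exact: ltW | exact: ltW].
have mr := mBo r; have m1 := mBo (1 : R).
have dis : [disjoint Bo r & Bo 1 `\` Bo r] by rewrite disj_set2E setDIK.
have mD : measurable (Bo 1 `\` Bo r) by exact: measurableD.
have E : Bo 1 = Bo r `|` (Bo 1 `\` Bo r) by rewrite setDUK.
split; rewrite {1}E.
  rewrite ge0_integral_setU //; first exact: mW.
  by move=> x _; rewrite lee_fin.
rewrite ge0_integral_setU //; last 2 first.
  exact: mPW.
  by move=> x _; rewrite lee_fin mulr_ge0 // psi_ge0.
apply: leeD.
  apply: ge0_le_integral => //.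
  - by move=> x _; rewrite lee_fin mulr_ge0 // psi_ge0.
  - exact: mPW.
  - exact: mW.
  - move=> x _; rewrite lee_fin -[X in _ <= X]mul1r ler_wpM2r //; exact: psi_le1.
rewrite -ge0_integralZl_EFin //.
all: try first [exact: mD | exact: mW | exact: sqr_ge0 | by move=> x _; rewrite lee_fin].
apply: ge0_le_integral => //.
- by move=> x _; rewrite lee_fin mulr_ge0 // psi_ge0.
- exact: mPW.
- apply/measurable_EFinP; apply: measurable_funM => //.
  by apply: measurable_funS mw => //; exact: mD.
- move=> x [h1 h2]; rewrite lee_fin ler_wpM2r //; apply: psi_ann => //; exact: ltW.
Qed.

End H.

Lemma ext_arith (R : realType) (A D T : \bar R) (m : R) :
  (0 <= A)%E -> (0 <= D)%E -> T = (A + D)%E -> (T <= m%:E)%E ->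
  exists a d : R, A = a%:E /\ D = d%:E /\ 0 <= a /\ 0 <= d /\ a + d <= m.
Proof.
move=> A0 D0 -> ; case: A A0 => [a||] //; case: D D0 => [d||] //.
by move=> d0 a0; rewrite -EFinD lee_fin => h; exists a, d.
Qed.

Theorem lemma2p1 (R : realType) (rho delta : R) :
  0 < rho < 1 -> 0 < delta < 1 ->
  (* (i) *)
  (exists H0 : R, 0 < H0 < 1 /\
    forall (w : R * R -> R) (m : R),
      (forall x, 0 <= w x) -> loc_L1_Linf w -> 0 < m ->
      (\int[leb2 R]_(x in Bo 1) (w x)%:E <= m%:E)%E ->
      (\int[leb2 R]_(x in Bo rho) (w x)%:E <= ((1 - delta) * m)%:E)%E ->
      (\int[leb2 R]_(x in [set: R * R]) (psi x * w x)%:E <= ((1 - H0) * m)%:E)%E)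
  /\
  (* (ii) *)
  (exists H1 : R, 0 < H1 < 1 /\
    forall (w : R * R -> R) (m : R),
      (forall x, 0 <= w x) -> loc_L1_Linf w -> 0 < m ->
      (\int[leb2 R]_(x in Bo 1) (w x)%:E <= m%:E)%E ->
      (((1 - H1) * m)%:E <= \int[leb2 R]_(x in [set: R * R]) (psi x * w x)%:E)%E ->
      (((1 - delta / 2) * m)%:E <= \int[leb2 R]_(x in Bo rho) (w x)%:E)%E)
  /\
  (* (iii) *)
  (forall (w : R * R -> R) (m H beta : R),
      (forall x, 0 <= w x) -> loc_L1_Linf w -> 0 < m ->
      (\int[leb2 R]_(x in Bo 1) (w x)%:E <= m%:E)%E ->
      0 < H < 1 ->
      (\int[leb2 R]_(x in [set: R * R]) (psi x * w x)%:E <= ((1 - H) * m)%:E)%E ->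
      0 < beta -> beta ^+ 2 <= H / 4 ->
      (\int[leb2 R]_(x in Bo beta) (w x)%:E <= ((1 - H / 2) * m)%:E)%E).
Proof.
move=> Hr /andP[d0 d1].
have /andP[r0 r1] := Hr.
have e0 : 0 < 1 - rho ^+ 2 by nra.
have e1 : 1 - rho ^+ 2 < 1 by nra.
set c := (1 - rho ^+ 2) ^+ 2.
have c0 : 0 <= c by rewrite /c sqr_ge0.
have c1 : c < 1 by rewrite /c; nra.
have common : forall (w : R * R -> R) (m : R),
    (forall x, 0 <= w x) -> loc_L1_Linf w ->
    (\int[leb2 R]_(x in Bo 1) (w x)%:E <= m%:E)%E ->
    exists a d : R, (\int[leb2 R]_(x in Bo rho) (w x)%:E = a%:E)%E /\
      0 <= a /\ 0 <= d /\ a + d <= m /\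
      (\int[leb2 R]_(x in [set: R * R]) (psi x * w x)%:E <= (a + c * d)%:E)%E.
  move=> w m w0 [mw _] HT.
  have [ET EP] := @split_ann R w w0 mw rho Hr.
  have I0 : forall D, (0 <= \int[leb2 R]_(x in D) (w x)%:E)%E.
    by move=> D; apply: integral_ge0 => x _; rewrite lee_fin.
  have [a [d [EA [ED [a0 [dd0 ad]]]]]] := @ext_arith R _ _ _ m (I0 _) (I0 _) ET HT.
  exists a, d; split => //; split => //; split => //; split => //.
  by rewrite (@P_restrict R w) EFinD EFinM -EA -ED.
split; [|split].
- exists ((1 - c) * delta); split.
    by apply/andP; split; nra.
  move=> w m w0 Lw m0 HT HA.
  have [a [d [EA [a0 [dd0 [ad EP]]]]]] := common w m w0 Lw HT.
  apply: (le_trans EP); rewrite lee_fin.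
  move: HA; rewrite EA lee_fin => HA.
  have h1 : 0 <= c * (m - a - d) by apply: mulr_ge0 => //; lra.
  have h2 : 0 <= (1 - c) * ((1 - delta) * m - a) by apply: mulr_ge0; lra.
  nra.
- exists ((1 - c) * delta / 2); split.
    by apply/andP; split; nra.
  move=> w m w0 Lw m0 HT HP.
  have [a [d [EA [a0 [dd0 [ad EP]]]]]] := common w m w0 Lw HT.
  have := le_trans HP EP; rewrite EA !lee_fin => h.
  have h1 : 0 <= c * (m - a - d) by apply: mulr_ge0 => //; lra.
  have key : (1 - c) * ((1 - delta / 2) * m) <= (1 - c) * a by nra.
  by rewrite ler_pM2l in key; lra.
move=> w m H beta w0 [mw Lw] m0 HT /andP[H0 H1] HP b0 hb.
have b1 : beta <= 1 by nra.
have bb : beta ^+ 2 <= 1 by nra.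
have sub : Bo beta `<=` Bo 1 by apply: BoS => //; exact: ltW.
have HB : (\int[leb2 R]_(x in Bo beta) (w x)%:E <= m%:E)%E.
  apply: le_trans HT; apply: ge0_subset_integral => //; try exact: mBo.
  - exact: mW.
  - by move=> x _; rewrite lee_fin.
have B0 : (0 <= \int[leb2 R]_(x in Bo beta) (w x)%:E)%E.
  by apply: integral_ge0 => x _; rewrite lee_fin.
have EI := @efin_bound R _ m B0 HB.
move: HB B0; rewrite EI; set b := fine _ => HB B0.
rewrite lee_fin in HB B0; rewrite lee_fin.
set k := (1 - beta ^+ 2) ^+ 2.
have kH : 1 - H / 2 <= k by rewrite /k; nra.
have Hk : (k%:E * b%:E <=
   \int[leb2 R]_(x in [set: R * R]) (psi x * w x)%:E)%E.
  have S : (\int[leb2 R]_(x in Bo beta) (psi x * w x)%:E <=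
     \int[leb2 R]_(x in [set: R * R]) (psi x * w x)%:E)%E.
    apply: ge0_subset_integral => //.
    all: try first [exact: mBo | exact: mPW |
       by move=> x _; rewrite lee_fin mulr_ge0 // psi_ge0].
  apply: le_trans S.
  rewrite -EI -ge0_integralZl_EFin //.
  all: try first [exact: mBo | exact: mW | by rewrite /k sqr_ge0 |
                  by move=> x _; rewrite lee_fin].
  apply: ge0_le_integral => //.
  all: try first [exact: mBo | exact: mPW |
       by move=> x _; rewrite lee_fin mulr_ge0 // ?psi_ge0 // /k sqr_ge0].
  - apply/measurable_EFinP; apply: measurable_funM => //.
    by apply: (measurable_funS measurableT) => //.
  - move=> x Bx; rewrite lee_fin ler_wpM2r //; apply: psi_in => //; exact: ltW.
have := le_trans Hk HP; rewrite -EFinM lee_fin => h.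
have h2 : (1 - H / 2) * b <= k * b by apply: ler_wpM2r.
have key : (1 - H / 2) * b <= (1 - H / 2) * ((1 - H / 2) * m) by nra.
by rewrite ler_pM2l in key; lra.
Qed.
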